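(* Let $p(\boldsymbol{x},y)$ be a joint density on $\mathcal{X}\times\{+1,-1\}$ with class priors $\pi_+=p(y=+1)\in(0,1)$, $\pi_-=1-\pi_+$. Generate a labeled noisy example as follows: draw two labeled examples $(\boldsymbol{x},y),(\boldsymbol{x}',y')$ independently from $p(\boldsymbol{x},y)$ conditioned on $(y,y')\in\{(+1,+1),(+1,-1),(-1,-1)\}$; independently draw an observed label $\widetilde{y}$ uniformly from $\{+1,-1\}$; if $\widetilde{y}=+1$ output the instance $\boldsymbol{x}$ with true label $y$, and if $\widetilde{y}=-1$ output the instance $\boldsymbol{x}'$ with true label $y'$. Denote the true label of the output by $y$ and define the inverse noise rates $\phi_+=p(y=-1\mid\widetilde{y}=+1)$, $\phi_-=p(y=+1\mid\widetilde{y}=-1)$ and the noise rates $\rho_+=p(\widetilde{y}=-1\mid y=+1)$, $\rho_-=p(\widetilde{y}=+1\mid y=-1)$. Then $$\phi_+=\frac{\pi_-^2}{\pi_+^2+\pi_-^2+\pi_+\pi_-},\quad \rho_+=\frac{\pi_+}{1+\pi_+},\quad \phi_-=\frac{\pi_+^2}{\pi_+^2+\pi_-^2+\pi_+\pi_-},\quad \rho_-=\frac{\pi_-}{1+\pi_-}.$$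
   Context: This formalizes viewing pairwise comparison data $(\boldsymbol{x},\boldsymbol{x}')$ as noisy-label data: the first component of each pair is treated as an observed positive ($\widetilde{y}=+1$) and the second as an observed negative ($\widetilde{y}=-1$), with equally many observed positives and negatives, so $p(\widetilde{y}=+1)=p(\widetilde{y}=-1)=1/2$. *)

(* Defs.v *)
From HB Require Import structures.
From mathcomp Require Import all_boot all_order all_algebra.
From mathcomp Require Import all_classical all_reals all_analysis.
Set Implicit Arguments. Unset Strict Implicit. Unset Printing Implicit Defensive.
Import Order.TTheory GRing.Theory Num.Theory.
Local Open Scope classical_set_scope.
Local Open Scope ring_scope.

(* Labels: true = +1, false = -1. *)
Section PairwiseNoise.
Context {d : measure_display} {X : measurableType d} {R : realType}.
Variable P : probability (X * bool)%type R.

Definition prior_pos : R := fine (P [set z | z.2 = true]).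
Definition prior_neg : R := 1 - prior_pos.

Definition pair_measure := (P \x P)%E.

Definition allowed : set ((X * bool) * (X * bool)) :=
  [set w | (w.1.2, w.2.2) \in [:: (true, true); (true, false); (false, false)]].

Definition pair_cond (A : set ((X * bool) * (X * bool))) : \bar R :=
  (pair_measure (A `&` allowed) / pair_measure allowed)%E.

(* law of the output ((x_out, y_out), y_tilde): y_tilde uniform on {+1,-1}
   independent of the pair; output (x,y) if y_tilde = +1, (x',y') otherwise *)
Definition out_law (A : set ((X * bool) * bool)) : \bar R :=
  ((2^-1)%:E * pair_cond [set w | A (w.1, true)] +
   (2^-1)%:E * pair_cond [set w | A (w.2, false)])%E.

Definition out_cond (A B : set ((X * bool) * bool)) : R :=
  fine (out_law (A `&` B)) / fine (out_law B).

Definition ev_true_label (b : bool) : set ((X * bool) * bool) := [set o | o.1.2 = b].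
Definition ev_obs_label (b : bool) : set ((X * bool) * bool) := [set o | o.2 = b].

Definition phi_pos : R := out_cond (ev_true_label false) (ev_obs_label true).
Definition phi_neg : R := out_cond (ev_true_label true) (ev_obs_label false).
Definition rho_pos : R := out_cond (ev_obs_label false) (ev_true_label true).
Definition rho_neg : R := out_cond (ev_obs_label true) (ev_true_label false).

End PairwiseNoise.

(* Main.v *)
Require Import Defs.
From HB Require Import structures.
From mathcomp Require Import all_boot all_order all_algebra.
From mathcomp Require Import all_classical all_reals all_analysis.
From mathcomp Require Import ring lra.
Import Order.TTheory GRing.Theory Num.Theory.
Local Open Scope classical_set_scope.
Local Open Scope ring_scope.

Section S.
Context (d : measure_display) (X : measurableType d) (R : realType)
  (P : probability (X * bool)%type R).

Definition L (b : bool) : set (X * bool) := [set z | z.2 = b].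
Lemma mL b : measurable (L b).
Proof.
have -> : L b = setT `*` [set b].
  by apply/seteqP; split=> -[x c]; rewrite /L /= => //; case.
exact: measurableX.
Qed.

Definition a := prior_pos P.

Lemma PLt : P (L true) = a%:E.
Proof. by rewrite /a /prior_pos fineK //; apply: fin_num_measure; exact: mL. Qed.

Lemma PLf : P (L false) = (1 - a)%:E.
Proof.
have -> : L false = ~` L true.
  by apply/seteqP; split=> -[x c]; rewrite /L /=; case: c.
by rewrite probability_setC ?PLt //; exact: mL.
Qed.

Lemma P1 (g : bool -> bool) :
  P [set z | g z.2] = ((g true)%:R * a + (g false)%:R * (1 - a))%:E.
Proof.
case Ht: (g true); case Hf: (g false).
- have -> : [set z : X * bool | g z.2] = [set: X * bool].
    by apply/seteqP; split=> -[x []] //= _; rewrite ?Ht ?Hf.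
  by rewrite probability_setT; congr (_%:E); rewrite /=; ring.
- have -> : [set z : X * bool | g z.2] = L true.
    by apply/seteqP; split=> -[x []]; rewrite /L /= ?Ht ?Hf.
  by rewrite PLt; congr (_%:E); rewrite /=; ring.
- have -> : [set z : X * bool | g z.2] = L false.
    by apply/seteqP; split=> -[x []]; rewrite /L /= ?Ht ?Hf.
  by rewrite PLf; congr (_%:E); rewrite /=; ring.
- have -> : [set z : X * bool | g z.2] = set0.
    by apply/seteqP; split=> -[x []]; rewrite /L /= ?Ht ?Hf.
  by rewrite measure0; congr (_%:E); rewrite /=; ring.
Qed.

Lemma mA (g : bool -> bool) : measurable [set z : X * bool | g z.2].
Proof.
have -> : [set z : X * bool | g z.2] = setT `*` [set c | g c].
  by apply/seteqP; split=> -[x c] //=; rewrite /setX /=; move=> [].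

exact: measurableX.
Qed.

Definition cellv (f : bool * bool -> bool) : R :=
  (f (true,true))%:R * a * a + (f (true,false))%:R * a * (1 - a)
  + (f (false,true))%:R * (1 - a) * a + (f (false,false))%:R * (1 - a) * (1 - a).

Lemma P2 (f : bool * bool -> bool) :
  pair_measure P [set w | f (w.1.2, w.2.2)] = (cellv f)%:E.
Proof.
pose A1 := [set z : X * bool | f (z.2, true)].
pose A2 := [set z : X * bool | f (z.2, false)].
have -> : [set w : (X * bool) * (X * bool) | f (w.1.2, w.2.2)] = (A1 `*` L true) `|` (A2 `*` L false).
  apply/seteqP; split=> -[[x c] [x' []]] /=; rewrite /A1 /A2 /L /=.
  - by left.
  - by right.
  - by case=> -[].
  - by case=> -[].
rewrite /pair_measure.
transitivity ((P \x P)%E (A1 `*` L true) + (P \x P)%E (A2 `*` L false))%E.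
apply: measureU.
- exact: (measurableX (mA (fun c => f (c, _))) (mL _)).
- exact: (measurableX (mA (fun c => f (c, _))) (mL _)).
- by apply/seteqP; split=> -[[x c] [x' c']] //=; rewrite /L /= => -[[_ ->] [_]].
rewrite !product_measure1E //; try exact: mL.
have h1 : P A1 = _ := P1 (fun c => f (c, true)).
have h2 : P A2 = _ := P1 (fun c => f (c, false)).
transitivity (P A1 * P (L true) + P A2 * P (L false))%E; first by [].
rewrite h1 h2 PLt PLf.
rewrite -!EFinM -EFinD; congr (_%:E); rewrite /cellv; ring.
- exact: (mA (fun c => f (c, false))).
- exact: (mA (fun c => f (c, true))).
Qed.


Definition L3 : seq (bool * bool) := [:: (true, true); (true, false); (false, false)].

Lemma pcE (S : set ((X * bool) * (X * bool))) (f : bool * bool -> bool) :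
  (forall w, S w <-> f (w.1.2, w.2.2)) -> pair_measure P S = (cellv f)%:E.
Proof.
move=> H; rewrite -P2; congr (pair_measure P _).
by apply/funext => w; apply/propext; exact: H.
Qed.

Definition Dv := cellv (fun uv => uv \in L3).

Lemma out_lawE (A : set ((X * bool) * bool)) (h : bool -> bool -> bool) :
  Dv != 0 ->
  (forall o, A o <-> h o.1.2 o.2) ->
  out_law P A = ((cellv (fun uv => h uv.1 true && (uv \in L3)) / Dv
     + cellv (fun uv => h uv.2 false && (uv \in L3)) / Dv) / 2)%:E.
Proof.
move=> D0 H; rewrite /out_law /pair_cond.
rewrite (@pcE allowed (fun uv => uv \in L3)) //.
rewrite (@pcE _ (fun uv => h uv.1 true && (uv \in L3))); last first.
  move=> w; rewrite /allowed /=; split.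
  - by move=> [/H /= /idP -> ->].
  - by move=> /andP [/idP hw ->]; split => //; apply/H.
rewrite (@pcE _ (fun uv => h uv.2 false && (uv \in L3))); last first.
  move=> w; rewrite /allowed /=; split.
  - by move=> [/H /= /idP -> ->].
  - by move=> /andP [/idP hw ->]; split => //; apply/H.
rewrite inver (negbTE D0) -!EFinM -EFinD; congr (_%:E); rewrite /Dv; field.
exact: D0.
Qed.

End S.
Arguments cellv {d X R} P f.
Arguments Dv {d X R} P.
Arguments out_lawE {d X R P A h}.
Arguments a {d X R} P.

Theorem theorem5 (d : measure_display) (X : measurableType d) (R : realType)
  (P : probability (X * bool)%type R)
  (hpi : 0 < prior_pos P < 1) :
  let pp := prior_pos P in let pn := prior_neg P in
  [/\ phi_pos P = pn ^+ 2 / (pp ^+ 2 + pn ^+ 2 + pp * pn),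
      rho_pos P = pp / (1 + pp),
      phi_neg P = pp ^+ 2 / (pp ^+ 2 + pn ^+ 2 + pp * pn)
    & rho_neg P = pn / (1 + pn)].
Proof.
move=> pp pn.
case/andP: hpi => h0 h1.
have D0 : Dv P != 0.
  rewrite /Dv /cellv /L3 /= /a -/pp.
  apply: lt0r_neq0; nra.
have E (A : set ((X * bool) * bool)) (h : bool -> bool -> bool) :
    (forall o, A o <-> h o.1.2 o.2) ->
    fine (out_law P A) = (cellv P (fun uv => h uv.1 true && (uv \in L3)) / Dv P
     + cellv P (fun uv => h uv.2 false && (uv \in L3)) / Dv P) / 2.
  by move=> H; rewrite (out_lawE D0 H).
have Ht b : forall o : (X * bool) * bool, ev_true_label b o <-> (fun u v => u == b) o.1.2 o.2.
  by move=> o; rewrite /ev_true_label /=; split => [->|/eqP].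
have Ho b : forall o : (X * bool) * bool, ev_obs_label b o <-> (fun u v => v == b) o.1.2 o.2.
  by move=> o; rewrite /ev_obs_label /=; split => [->|/eqP].
have Hto b c : forall o : (X * bool) * bool, (ev_true_label b `&` ev_obs_label c) o <->
    (fun u v => (u == b) && (v == c)) o.1.2 o.2.
  move=> o; rewrite /ev_true_label /ev_obs_label /=.
  by split => [[-> ->]|/andP [/eqP -> /eqP ->]]; rewrite ?eqxx.
have Hot b c : forall o : (X * bool) * bool, (ev_obs_label c `&` ev_true_label b) o <->
    (fun u v => (u == b) && (v == c)) o.1.2 o.2.
  move=> o; rewrite /ev_true_label /ev_obs_label /=.
  by split => [[-> ->]|/andP [/eqP -> /eqP ->]]; rewrite ?eqxx.
rewrite /phi_pos /phi_neg /rho_pos /rho_neg /out_cond.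
pose hb b c := fun u v : bool => (u == b) && (v == c).
pose ht b := fun u v : bool => u == b.
pose ho c := fun u v : bool => v == c.
rewrite (E _ (hb false true) (Hto false true)) (E _ (hb true false) (Hto true false)).
rewrite (E _ (hb true false) (Hot true false)) (E _ (hb false true) (Hot false true)).
rewrite (E _ (ht true) (Ht true)) (E _ (ht false) (Ht false)).
rewrite (E _ (ho true) (Ho true)) (E _ (ho false) (Ho false)).
move: D0; rewrite /Dv /cellv /L3 /= /a -/pp /pn /prior_neg -/pp => D0.
rewrite !(mul0r, mul1r, add0r, addr0) in D0 *.
have h0p : 0 < pp := h0.
have h1p : pp < 1 := h1.
have q0 : 0 < 1 - pp by rewrite subr_gt0.
have Dp : 0 < pp * pp + pp * (1 - pp) + (1 - pp) * (1 - pp) by nra.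
split; field; by repeat (apply/andP; split); apply: lt0r_neq0; nra.

Qed.
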